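(* The ``vanilla'' meta-interpreter $M_0$ preserves LD-termination: for every definite program $P$ and every atomic query $Q_0\in B^E_P$, the LD-tree of $P\cup\{Q_0\}$ is finite if and only if the LD-tree of $(M_0\cup\mathit{ce}(P))\cup\{\mathit{solve}(Q_0)\}$ is finite.
   Context: Logic programs are definite; the LD-tree of $P\cup\{Q\}$ is the SLD-tree under Prolog's left-to-right selection rule. $B^E_P$ is the set of atoms of the language of $P$ modulo variance. Clause encoding: a clause body $B_1,\dots,B_n$ ($n\ge1$) is represented as the term $(B_1,(B_2,\dots,B_n))$ built with a binary functor $,/2$, and an empty body by the constant $\mathit{true}$. The clause-encoding $\mathit{ce}(P)$ is the set of facts $\mathit{clause}(H,B)$, one for each clause $H\leftarrow B$ of $P$. The symbols $,/2$, $\mathit{clause}$, $\mathit{solve}$ do not occur in the language of $P$. The ``vanilla'' meta-interpreter $M_0$ is the program $\mathit{solve}(\mathit{true}).$ $\mathit{solve}((A,B))\leftarrow \mathit{solve}(A),\mathit{solve}(B).$ $\mathit{solve}(H)\leftarrow \mathit{clause}(H,B),\mathit{solve}(B).$ *)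

(* Defs.v *)
From Stdlib Require Import List.
Import ListNotations.

(* Symbols: user symbols (the language of P) plus the reserved symbols
   ,/2, true, clause, solve which do not occur in the language of P. *)
Inductive sym : Type :=
  | Usr (n : nat)
  | Comma
  | TrueS
  | ClauseS
  | SolveS.

(* Terms; atoms are terms headed by a (predicate) symbol. *)
Inductive term : Type :=
  | Var (x : nat)
  | Fun (f : sym) (args : list term).

Definition is_usr (f : sym) : Prop :=
  match f with Usr _ => True | _ => False end.

Fixpoint user_term (t : term) : Prop :=
  match t with
  | Var _ => True
  | Fun f ts =>
      is_usr f /\
      (fix go (l : list term) : Prop :=
         match l with [] => True | u :: l' => user_term u /\ go l' end) ts
  end.

Definition user_atom (t : term) : Prop :=
  exists p args, t = Fun (Usr p) args /\ user_term t.

Fixpoint occurs (x : nat) (t : term) : Prop :=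
  match t with
  | Var y => x = y
  | Fun _ ts =>
      (fix go (l : list term) : Prop :=
         match l with [] => False | u :: l' => occurs x u \/ go l' end) ts
  end.

Definition subst := nat -> term.

Fixpoint apply (s : subst) (t : term) : term :=
  match t with
  | Var x => s x
  | Fun f ts => Fun f (map (apply s) ts)
  end.

Definition unifier (s : subst) (t1 t2 : term) : Prop := apply s t1 = apply s t2.

Definition mgu (s : subst) (t1 t2 : term) : Prop :=
  unifier s t1 t2 /\
  forall s', unifier s' t1 t2 -> exists d, forall x, s' x = apply d (s x).

Definition clause : Type := (term * list term)%type.
Definition program : Type := list clause.
Definition goal : Type := list term.

Definition user_program (P : program) : Prop :=
  forall c, In c P -> user_atom (fst c) /\ forall b, In b (snd c) -> user_atom b.

Definition rename (r : nat -> nat) (t : term) : term := apply (fun x => Var (r x)) t.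

Definition occurs_goal (x : nat) (G : goal) : Prop := exists A, In A G /\ occurs x A.

(* One LD-resolution step (leftmost selection rule), using a variant of a
   program clause standardized apart from the goal and an mgu. *)
Definition ld_step (P : program) (G G' : goal) : Prop :=
  exists A rest H B r s,
    G = A :: rest /\
    In (H, B) P /\
    (forall x y, r x = r y -> x = y) /\
    (forall x, occurs_goal x (rename r H :: map (rename r) B) -> ~ occurs_goal x G) /\
    mgu s A (rename r H) /\
    G' = map (apply s) (map (rename r) B ++ rest).

(* The LD-tree of P u {G} is finite: every LD-derivation from G is finite
   (the LD-tree is finitely branching up to variance). *)
Inductive ld_finite (P : program) : goal -> Prop :=
  | ld_fin : forall G, (forall G', ld_step P G G' -> ld_finite P G') -> ld_finite P G.

Definition true_t : term := Fun TrueS [].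
Definition comma (a b : term) : term := Fun Comma [a; b].

Fixpoint enc_body (B : list term) : term :=
  match B with
  | [] => true_t
  | [b] => b
  | b :: B' => comma b (enc_body B')
  end.

Definition solve (t : term) : term := Fun SolveS [t].
Definition clause_at (h b : term) : term := Fun ClauseS [h; b].

Definition ce (P : program) : program :=
  map (fun c => (clause_at (fst c) (enc_body (snd c)), [])) P.

Definition M0 : program :=
  [ (solve true_t, []);
    (solve (comma (Var 0) (Var 1)), [solve (Var 0); solve (Var 1)]);
    (solve (Var 0), [clause_at (Var 0) (Var 1); solve (Var 1)]) ].

(* Main.v *)
Require Import Defs.
From Stdlib Require Import List Arith Lia ClassicalEpsilon.
Import ListNotations.

Fixpoint term_ind' (Pt : term -> Prop) (HV : forall x, Pt (Var x))
  (HF : forall f ts, Forall Pt ts -> Pt (Fun f ts)) (t : term) : Pt t :=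
  match t with
  | Var x => HV x
  | Fun f ts => HF f ts
      ((fix go (l : list term) : Forall Pt l :=
          match l with
          | [] => Forall_nil _
          | u :: l' => Forall_cons _ (term_ind' Pt HV HF u) (go l')
          end) ts)
  end.

Lemma occurs_Fun x f ts : occurs x (Fun f ts) <-> exists u, In u ts /\ occurs x u.
Proof.
  simpl. induction ts as [|u ts IH]; simpl.
  - split; [tauto| intros [u [[] _]]].
  - rewrite IH. split.
    + intros [H|[v [Hv Hx]]]; eauto.
    + intros [v [[<-|Hv] Hx]]; eauto.
Qed.

Lemma apply_Fun s f ts : apply s (Fun f ts) = Fun f (map (apply s) ts).
Proof. reflexivity. Qed.

Lemma apply_ext s1 s2 t : (forall x, occurs x t -> s1 x = s2 x) -> apply s1 t = apply s2 t.
Proof.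
  induction t as [x|f ts IH] using term_ind'; intros H.
  - simpl. apply H. simpl. reflexivity.
  - rewrite !apply_Fun. f_equal. apply map_ext_in. intros u Hu.
    rewrite Forall_forall in IH. apply IH; auto. intros x Hx. apply H.
    apply occurs_Fun. eauto.
Qed.

Lemma apply_comp s1 s2 t : apply s1 (apply s2 t) = apply (fun x => apply s1 (s2 x)) t.
Proof.
  induction t as [x|f ts IH] using term_ind'.
  - reflexivity.
  - rewrite !apply_Fun, map_map. f_equal. apply map_ext_in. intros u Hu.
    rewrite Forall_forall in IH. auto.
Qed.

Lemma apply_var t : apply Var t = t.
Proof.
  induction t as [x|f ts IH] using term_ind'.
  - reflexivity.
  - rewrite apply_Fun. f_equal. rewrite Forall_forall in IH.
    rewrite <- (map_id ts) at 2. apply map_ext_in. auto.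
Qed.

Lemma occurs_apply x s t : occurs x (apply s t) <-> exists y, occurs y t /\ occurs x (s y).
Proof.
  induction t as [z|f ts IH] using term_ind'.
  - simpl. split; [eauto| intros [y [-> H]]; auto].
  - rewrite apply_Fun, occurs_Fun. rewrite Forall_forall in IH. split.
    + intros [u [Hu Hx]]. apply in_map_iff in Hu. destruct Hu as [v [<- Hv]].
      apply IH in Hx; auto. destruct Hx as [y [Hy Hxy]]. exists y. split; auto.
      apply occurs_Fun. eauto.
    + intros [y [Hy Hxy]]. apply occurs_Fun in Hy. destruct Hy as [u [Hu Hyu]].
      exists (apply s u). split. apply in_map; auto. apply IH; eauto.
Qed.

Lemma apply_fix s t : apply s t = t -> forall x, occurs x t -> s x = Var x.
Proof.
  induction t as [z|f ts IH] using term_ind'; intros H x Hx.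
  - simpl in *. subst. auto.
  - rewrite apply_Fun in H. injection H as H. apply occurs_Fun in Hx.
    destruct Hx as [u [Hu Hx]]. rewrite Forall_forall in IH. apply (IH u Hu); auto.
    clear -H Hu. induction ts; simpl in *. destruct Hu. injection H as H1 H2.
    destruct Hu as [<-|Hu]; auto.
Qed.
Definition injective (r : nat -> nat) := forall x y, r x = r y -> x = y.

Lemma occurs_goal_cons x A G : occurs_goal x (A :: G) <-> occurs x A \/ occurs_goal x G.
Proof.
  unfold occurs_goal. simpl. split.
  - intros [B [[<-|HB] Hx]]; eauto.
  - intros [H|[B [HB Hx]]]; eauto.
Qed.

Lemma occurs_goal_app x G1 G2 : occurs_goal x (G1 ++ G2) <-> occurs_goal x G1 \/ occurs_goal x G2.
Proof.
  unfold occurs_goal. split.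
  - intros [B [HB Hx]]. apply in_app_or in HB. destruct HB; eauto.
  - intros [[B [HB Hx]]|[B [HB Hx]]]; exists B; split; auto; apply in_or_app; auto.
Qed.

Lemma occurs_goal_map x s G : occurs_goal x (map (apply s) G) <-> exists y, occurs_goal y G /\ occurs x (s y).
Proof.
  unfold occurs_goal. split.
  - intros [B [HB Hx]]. apply in_map_iff in HB. destruct HB as [C [<- HC]].
    apply occurs_apply in Hx. destruct Hx as [y [Hy Hxy]]. eauto.
  - intros [y [[C [HC Hy]] Hxy]]. exists (apply s C). split. apply in_map; auto.
    apply occurs_apply; eauto.
Qed.

Lemma occurs_rename x r t : occurs x (rename r t) <-> exists y, occurs y t /\ x = r y.
Proof. unfold rename. rewrite occurs_apply. simpl. reflexivity. Qed.

Lemma map_apply_ext s1 s2 G : (forall x, occurs_goal x G -> s1 x = s2 x) ->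
  map (apply s1) G = map (apply s2) G.
Proof.
  intros H. apply map_ext_in. intros u Hu. apply apply_ext. intros x Hx. apply H.
  exists u; auto.
Qed.

Lemma map_apply_comp s1 s2 G : map (apply s1) (map (apply s2) G) = map (apply (fun x => apply s1 (s2 x))) G.
Proof. rewrite map_map. apply map_ext. intros. apply apply_comp. Qed.

Lemma map_apply_var G : map (apply Var) G = G.
Proof. rewrite <- (map_id G) at 2. apply map_ext. apply apply_var. Qed.

Definition var_eq (G1 G2 : goal) : Prop :=
  (exists th, G1 = map (apply th) G2) /\ (exists et, G2 = map (apply et) G1).

Lemma var_eq_refl G : var_eq G G.
Proof. split; exists Var; rewrite map_apply_var; auto. Qed.

Lemma var_eq_sym G1 G2 : var_eq G1 G2 -> var_eq G2 G1.
Proof. intros [H1 H2]; split; auto. Qed.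

Lemma var_eq_trans G1 G2 G3 : var_eq G1 G2 -> var_eq G2 G3 -> var_eq G1 G3.
Proof.
  intros [[a Ha] [b Hb]] [[c Hc] [d Hd]]. split.
  - exists (fun x => apply a (c x)). rewrite Ha, Hc, map_apply_comp. auto.
  - exists (fun x => apply d (b x)). rewrite Hd, Hb, map_apply_comp. auto.
Qed.

Definition dbl (x : nat) := 2 * x.

Lemma var_eq_dbl G : var_eq G (map (rename dbl) G).
Proof.
  split.
  - exists (fun x => Var (Nat.div2 x)). unfold rename. rewrite map_apply_comp.
    simpl. unfold dbl. rewrite <- (map_apply_var G) at 1. apply map_ext. intros u.
    apply apply_ext. intros. rewrite Nat.div2_double. auto.
  - exists (fun x => Var (dbl x)). reflexivity.
Qed.

Definition ext (V : nat -> Prop) (g : subst) : subst :=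
  fun x => if excluded_middle_informative (V x) then rename dbl (g x) else Var (S (2 * x)).

Lemma apply_ext_V V g u : (forall x, occurs x u -> V x) -> apply (ext V g) u = rename dbl (apply g u).
Proof.
  intros H. unfold rename. rewrite apply_comp. apply apply_ext. intros x Hx.
  unfold ext. destruct (excluded_middle_informative (V x)); auto.
  exfalso; auto.
Qed.

Lemma mgu_of_partial (V : nat -> Prop) g t1 t2 :
  (forall x, occurs x t1 -> V x) -> (forall x, occurs x t2 -> V x) ->
  apply g t1 = apply g t2 ->
  (forall t, unifier t t1 t2 -> exists d, forall x, V x -> t x = apply d (g x)) ->
  mgu (ext V g) t1 t2.
Proof.
  intros H1 H2 Hu Hg. split.
  - unfold unifier. rewrite !apply_ext_V by auto. rewrite Hu. auto.
  - intros t Ht. destruct (Hg t Ht) as [d Hd].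
    exists (fun z => if Nat.even z then d (Nat.div2 z) else t (Nat.div2 z)).
    intros x. unfold ext. destruct (excluded_middle_informative (V x)) as [Hv|Hv].
    + rewrite Hd by auto. unfold rename. rewrite apply_comp. apply apply_ext.
      intros y _. unfold dbl. cbn [apply]. rewrite Nat.even_even, Nat.div2_double. auto.
    + cbn [apply]. rewrite Nat.even_succ. unfold Nat.odd. rewrite Nat.even_even.
      cbn iota beta. rewrite Nat.div2_succ_double. auto.
Qed.

Fixpoint maxv (t : term) : nat :=
  match t with
  | Var x => x
  | Fun _ ts => (fix go (l : list term) : nat :=
                   match l with [] => 0 | u :: l' => Nat.max (maxv u) (go l') end) ts
  end.

Lemma occurs_le x t : occurs x t -> x <= maxv t.
Proof.
  induction t as [z|f ts IH] using term_ind'; intros H.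
  - simpl in *. lia.
  - apply occurs_Fun in H. destruct H as [u [Hu Hx]]. rewrite Forall_forall in IH.
    specialize (IH u Hu Hx). simpl. clear -IH Hu. induction ts; simpl in *.
    destruct Hu. destruct Hu as [<-|Hu]. lia. specialize (IHts Hu). lia.
Qed.

Definition maxg (G : goal) : nat := fold_right (fun A n => Nat.max (maxv A) n) 0 G.

Lemma occurs_goal_le x G : occurs_goal x G -> x <= maxg G.
Proof.
  intros [A [HA Hx]]. apply occurs_le in Hx. induction G; simpl in *. destruct HA.
  destruct HA as [<-|HA]. lia. specialize (IHG HA). lia.
Qed.

Definition fresh_for (r : nat -> nat) (H : term) (B : list term) (G : goal) :=
  forall x, occurs_goal x (rename r H :: map (rename r) B) -> ~ occurs_goal x G.

Lemma occurs_goal_rename x r G : occurs_goal x (map (rename r) G) -> exists y, occurs_goal y G /\ x = r y.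
Proof.
  unfold rename. intros Hx. apply occurs_goal_map in Hx. destruct Hx as [y [Hy Hx]].
  simpl in Hx. eauto.
Qed.

Lemma fresh_ex G H B : exists r, injective r /\ fresh_for r H B G.
Proof.
  exists (fun x => x + S (maxg G)). split.
  - intros x y E. lia.
  - intros x Hx Hg. apply occurs_goal_le in Hg.
    assert (Hr : exists y, x = y + S (maxg G)).
    { apply (occurs_goal_rename x (fun x => x + S (maxg G)) (H :: B)) in Hx.
      destruct Hx as [y [_ Hy]]; eauto. }
    destruct Hr as [y ->]. lia.
Qed.

Lemma fresh_shift G H B N : maxg G < N -> fresh_for (fun x => x + N) H B G.
Proof.
  intros HN x Hx Hg. apply occurs_goal_le in Hg.
  apply (occurs_goal_rename x (fun x => x + N) (H :: B)) in Hx.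
  destruct Hx as [y [_ ->]]. lia.
Qed.

Definition inv (r : nat -> nat) (x : nat) : nat :=
  match excluded_middle_informative (exists y, r y = x) with
  | left H => proj1_sig (constructive_indefinite_description _ H)
  | right _ => 0
  end.

Lemma inv_r r y : injective r -> inv r (r y) = y.
Proof.
  intros Hr. unfold inv. destruct (excluded_middle_informative _) as [H|H].
  - destruct (constructive_indefinite_description _ H) as [z Hz]. simpl. auto.
  - exfalso. eauto.
Qed.

Lemma map_fix_in {A} (f : A -> A) l u : map f l = l -> In u l -> f u = u.
Proof.
  induction l; simpl; intros E Hu. destruct Hu. injection E as E1 E2.
  destruct Hu as [<-|Hu]; auto.
Qed.

Lemma occurs_goal_rename_in y r G : occurs_goal y G -> occurs_goal (r y) (map (rename r) G).
Proof.
  intros Hy. unfold rename. apply occurs_goal_map. exists y. split; auto. simpl. auto.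
Qed.

Lemma bisim A1 rest1 A2 rest2 H B r s r2 :
  var_eq (A1 :: rest1) (A2 :: rest2) ->
  injective r -> fresh_for r H B (A1 :: rest1) -> mgu s A1 (rename r H) ->
  injective r2 -> fresh_for r2 H B (A2 :: rest2) ->
  exists s2, mgu s2 A2 (rename r2 H) /\
    var_eq (map (apply s) (map (rename r) B ++ rest1))
           (map (apply s2) (map (rename r2) B ++ rest2)).
Proof.
  intros [[th Hth] [et Het]] Hr Hf [Hu Hg] Hr2 Hf2.
  set (G1 := A1 :: rest1) in *. set (G2 := A2 :: rest2) in *.
  assert (Hfix : forall x, occurs_goal x G2 -> apply et (th x) = Var x).
  { intros x [u [Hu2 Hx]].
    assert (E : map (apply (fun z => apply et (th z))) G2 = G2).
    { rewrite <- map_apply_comp, <- Hth. auto. }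
    apply (apply_fix (fun z => apply et (th z)) u); auto.
    exact (map_fix_in _ _ u E Hu2). }
  assert (Hth1 : A1 = apply th A2 /\ rest1 = map (apply th) rest2).
  { unfold G1, G2 in Hth. simpl in Hth. injection Hth; auto. }
  assert (Het1 : A2 = apply et A1).
  { unfold G1, G2 in Het. simpl in Het. injection Het; auto. }
  destruct Hth1 as [HA1 Hrest1].
  assert (HG1 : forall z x, occurs_goal x G2 -> occurs z (th x) -> occurs_goal z G1).
  { intros z x Hx Hz. rewrite Hth. apply occurs_goal_map. eauto. }
  assert (Hcl : forall y, occurs_goal y (H :: B) -> ~ occurs_goal (r y) G1).
  { intros y Hy. apply Hf. apply (occurs_goal_rename_in y r (H :: B)). auto. }
  assert (Hcl2 : forall y, occurs_goal y (H :: B) -> ~ occurs_goal (r2 y) G2).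
  { intros y Hy. apply Hf2. apply (occurs_goal_rename_in y r2 (H :: B)). auto. }
  set (ka := fun x => if excluded_middle_informative (occurs_goal x G1) then et x
                      else Var (r2 (inv r x))).
  set (g := fun x => if excluded_middle_informative (occurs_goal x G2) then apply s (th x)
                     else s (r (inv r2 x))).
  set (V := fun x => occurs_goal x G2 \/ exists y, occurs_goal y (H :: B) /\ x = r2 y).
  assert (K1 : apply ka A1 = A2).
  { rewrite Het1. apply apply_ext. intros x Hx. unfold ka.
    destruct (excluded_middle_informative _) as [_|n]; auto.
    exfalso. apply n. exists A1. simpl; auto. }
  assert (K2 : forall u, (forall y, occurs y u -> occurs_goal y (H :: B)) ->
             apply ka (rename r u) = rename r2 u).
  { intros u Hu'. unfold rename. rewrite apply_comp. apply apply_ext. intros y Hy.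
    simpl. unfold ka. destruct (excluded_middle_informative _) as [c|_].
    - exfalso. eapply Hcl; eauto.
    - rewrite inv_r; auto. }
  assert (G2e : forall u, (forall x, occurs x u -> occurs_goal x G2) ->
             apply g u = apply s (apply th u)).
  { intros u Hu'. rewrite apply_comp. apply apply_ext. intros x Hx. unfold g.
    destruct (excluded_middle_informative _) as [_|n]; auto. exfalso; auto. }
  assert (G2c : forall u, (forall y, occurs y u -> occurs_goal y (H :: B)) ->
             apply g (rename r2 u) = apply s (rename r u)).
  { intros u Hu'. unfold rename. rewrite !apply_comp. apply apply_ext. intros y Hy.
    simpl. unfold g. destruct (excluded_middle_informative _) as [c|_].
    - exfalso. eapply Hcl2; eauto.
    - rewrite inv_r; auto. }
  assert (HA2 : forall x, occurs x A2 -> occurs_goal x G2).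
  { intros x Hx. exists A2. simpl; auto. }
  assert (HH : forall y, occurs y H -> occurs_goal y (H :: B)).
  { intros y Hy. exists H. simpl; auto. }
  assert (HVr : forall u, (forall y, occurs y u -> occurs_goal y (H :: B)) ->
              forall x, occurs x (rename r2 u) -> V x).
  { intros u Hu' x Hx. apply occurs_rename in Hx. destruct Hx as [y [Hy ->]].
    right. eauto. }
  exists (ext V g). split.
  - apply mgu_of_partial.
    + intros x Hx. left. auto.
    + apply HVr. auto.
    + rewrite G2e, G2c by auto. rewrite <- HA1. auto.
    + intros t Ht.
      destruct (Hg (fun x => apply t (ka x))) as [d Hd].
      { unfold unifier. rewrite <- !apply_comp. rewrite K1, K2 by auto. auto. }
      exists d. intros x [Hx|[y [Hy ->]]].
      * unfold g. destruct (excluded_middle_informative _) as [_|n]; [|contradiction].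
        rewrite apply_comp. rewrite (apply_ext _ (fun z => apply t (ka z))).
        2:{ intros z _. auto. }
        rewrite <- apply_comp.
        rewrite (apply_ext ka et).
        2:{ intros z Hz. unfold ka. destruct (excluded_middle_informative _) as [_|n']; auto.
            exfalso. apply n'. eapply HG1; eauto. }
        rewrite Hfix; auto.
      * unfold g. destruct (excluded_middle_informative _) as [c|_].
        { exfalso. eapply Hcl2; eauto. }
        rewrite inv_r by auto. rewrite <- Hd. unfold ka.
        destruct (excluded_middle_informative _) as [c|_].
        { exfalso. eapply Hcl; eauto. }
        rewrite inv_r by auto. reflexivity.
  - assert (E : map (apply (ext V g)) (map (rename r2) B ++ rest2) =
                map (rename dbl) (map (apply s) (map (rename r) B ++ rest1))).
    { rewrite Hrest1. rewrite !map_app, !map_map. f_equal.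
      - apply map_ext_in. intros u Hu'.
        assert (Hy : forall y, occurs y u -> occurs_goal y (H :: B)).
        { intros y Hy. exists u. simpl; auto. }
        rewrite apply_ext_V by (apply HVr; auto). rewrite G2c; auto.
      - apply map_ext_in. intros u Hu'.
        assert (Hy : forall y, occurs y u -> occurs_goal y G2).
        { intros y Hy. exists u. simpl; auto. }
        rewrite apply_ext_V by (intros; left; auto). rewrite G2e; auto. }
    rewrite E. apply var_eq_dbl.
Qed.

Lemma step_var Prog G1 G2 G1' : var_eq G1 G2 -> ld_step Prog G1 G1' ->
  exists G2', ld_step Prog G2 G2' /\ var_eq G1' G2'.
Proof.
  intros HV (A & rest & H & B & r & s & -> & Hin & Hinj & Hfr & Hmgu & ->).
  destruct G2 as [|A2 rest2].
  { destruct HV as [[th Hth] _]. discriminate. }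
  destruct (fresh_ex (A2 :: rest2) H B) as [r2 [Hr2 Hf2]].
  destruct (bisim A rest A2 rest2 H B r s r2) as [s2 [Hm2 HV2]]; auto.
  eexists. split; [|exact HV2].
  exists A2, rest2, H, B, r2, s2.
  exact (conj eq_refl (conj Hin (conj Hr2 (conj Hf2 (conj Hm2 eq_refl))))).
Qed.

Lemma acc_var Prog G1 G2 : ld_finite Prog G1 -> var_eq G1 G2 -> ld_finite Prog G2.
Proof.
  intros HA. revert G2. induction HA as [G1 _ IH]. intros G2 HV. constructor.
  intros G2' Hs. destruct (step_var Prog G2 G1 G2') as [G1' [Hs1 HV1]]; auto.
  apply var_eq_sym; auto. apply (IH G1'); auto. apply var_eq_sym; auto.
Qed.

Definition uh (t : term) := exists p args, t = Fun (Usr p) args.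

Lemma uh_apply s t : uh t -> uh (apply s t).
Proof. intros (p & args & ->). exists p, (map (apply s) args). reflexivity. Qed.

Lemma apply_enc s L : apply s (enc_body L) = enc_body (map (apply s) L).
Proof.
  induction L as [|b L IH]; [reflexivity|].
  destruct L as [|b' L]; [reflexivity|].
  transitivity (comma (apply s b) (apply s (enc_body (b' :: L)))). reflexivity.
  rewrite IH. reflexivity.
Qed.

Lemma rename_enc r L : rename r (enc_body L) = enc_body (map (rename r) L).
Proof. apply apply_enc. Qed.

Lemma rename_clause_at r H L :
  rename r (clause_at H (enc_body L)) = clause_at (rename r H) (enc_body (map (rename r) L)).
Proof. rewrite <- rename_enc. reflexivity. Qed.

Lemma occurs_enc x L b : In b L -> occurs x b -> occurs x (enc_body L).
Proof.
  induction L as [|c L IH]; intros Hb Hx; [destruct Hb|].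
  destruct L as [|c' L].
  - destruct Hb as [<-|[]]. exact Hx.
  - change (enc_body (c :: c' :: L)) with (Fun Comma [c; enc_body (c' :: L)]).
    apply occurs_Fun. destruct Hb as [<-|Hb].
    + exists c. simpl; auto.
    + exists (enc_body (c' :: L)). simpl; auto.
Qed.

Inductive SR : goal -> goal -> Prop :=
| S_nil : SR [] []
| S_cons L GM GP : Forall uh L -> SR GM GP -> SR (solve (enc_body L) :: GM) (L ++ GP).

Lemma S_subst s GM GP : SR GM GP -> SR (map (apply s) GM) (map (apply s) GP).
Proof.
  induction 1 as [|L GM GP HL HS IH]; simpl. constructor.
  rewrite map_app. change (apply s (solve (enc_body L))) with (solve (apply s (enc_body L))).
  rewrite apply_enc. constructor; auto.
  rewrite Forall_forall in *. intros u Hu. apply in_map_iff in Hu.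
  destruct Hu as [v [<- Hv]]. apply uh_apply; auto.
Qed.

Lemma S_vars x GM GP : SR GM GP -> occurs_goal x GP -> occurs_goal x GM.
Proof.
  induction 1 as [|L GM GP HL HS IH]; intros Hx; auto.
  apply occurs_goal_app in Hx. apply occurs_goal_cons. destruct Hx as [[b [Hb Hx]]|Hx]; auto.
  left. apply occurs_Fun. exists (enc_body L). split. simpl; auto. eapply occurs_enc; eauto.
Qed.

Definition Rel (GM GP : goal) : Prop :=
  SR GM GP \/
  exists A v GM' GP', GM = clause_at A (Var v) :: solve (Var v) :: GM' /\
    GP = A :: GP' /\ uh A /\ SR GM' GP' /\ ~ occurs v A /\ ~ occurs_goal v GM'.

Lemma M_clause P Hc Bc : In (Hc, Bc) (M0 ++ ce P) ->
  (Hc = solve true_t /\ Bc = []) \/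
  (Hc = solve (comma (Var 0) (Var 1)) /\ Bc = [solve (Var 0); solve (Var 1)]) \/
  (Hc = solve (Var 0) /\ Bc = [clause_at (Var 0) (Var 1); solve (Var 1)]) \/
  (exists H B, In (H, B) P /\ Hc = clause_at H (enc_body B) /\ Bc = []).
Proof.
  intros Hin. apply in_app_or in Hin. destruct Hin as [Hin|Hin].
  - destruct Hin as [E|[E|[E|[]]]]; injection E; intros; subst; auto.
  - right; right; right. apply in_map_iff in Hin. destruct Hin as [[H B] [E Hin]].
    injection E; intros; subst. simpl. eauto.
Qed.

Lemma dead P a b rest f ts : user_program P -> a = Fun f ts -> (forall p, f <> Usr p) ->
  ld_finite (M0 ++ ce P) (clause_at a b :: rest).
Proof.
  intros HP -> Hf. constructor. intros G' (A & rest' & Hc & Bc & r & s & HG & Hin & _ & _ & [Hu _] & _).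
  injection HG as <- _. unfold unifier in Hu.
  apply M_clause in Hin.
  destruct Hin as [[-> ->]|[[-> ->]|[[-> ->]|(H & B & HinP & -> & ->)]]];
    try (simpl in Hu; discriminate).
  rewrite rename_clause_at in Hu. simpl in Hu. injection Hu as Hu _.
  destruct (HP _ HinP) as [(p & args & Hh & _) _]. simpl in Hh. subst H.
  simpl in Hu. injection Hu as Hu _. destruct (Hf p Hu).
Qed.

Fixpoint w (t : term) : nat :=
  match t with
  | Fun Comma [a; b] => S (w a + w b)
  | Fun TrueS _ => 1
  | Fun (Usr _) _ => 2
  | _ => 0
  end.

Definition mm (A : term) : nat := match A with Fun SolveS [t] => w t | _ => 0 end.
Definition msr (G : goal) : nat := fold_right (fun A n => mm A + n) 0 G.

Lemma var_eq_subst s d G : (forall x, occurs_goal x G -> apply d (s x) = Var x) ->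
  var_eq G (map (apply s) G).
Proof.
  intros H. split.
  - exists d. rewrite map_apply_comp. rewrite <- (map_apply_var G) at 1.
    symmetry. apply map_apply_ext. auto.
  - exists s. auto.
Qed.

Lemma occ_cons_l x A G : occurs x A -> occurs_goal x (A :: G).
Proof. intros; apply occurs_goal_cons; auto. Qed.
Lemma occ_cons_r x A G : occurs_goal x G -> occurs_goal x (A :: G).
Proof. intros; apply occurs_goal_cons; auto. Qed.

Lemma occ_sub1 x f a ts : occurs x a -> occurs x (Fun f (a :: ts)).
Proof. intros; apply occurs_Fun; exists a; simpl; auto. Qed.
Lemma occ_sub2 x f a b ts : occurs x b -> occurs x (Fun f (a :: b :: ts)).
Proof. intros; apply occurs_Fun; exists b; simpl; auto. Qed.

Lemma fresh_shift2 G H B N : (forall x, occurs_goal x G -> x < N) -> fresh_for (fun x => x + N) H B G.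
Proof.
  intros HN x Hx Hg. apply HN in Hg.
  apply (occurs_goal_rename x (fun x => x + N) (H :: B)) in Hx.
  destruct Hx as [y [_ ->]]. lia.
Qed.

Lemma dirB P : user_program P -> forall GM, ld_finite (M0 ++ ce P) GM ->
  forall GP GP0, Rel GM GP0 -> var_eq GP0 GP -> ld_finite P GP.
Proof.
  intros HP GM HA. induction HA as [GM _ IH]. intros GP GP0 HR HV.
  set (N := Datatypes.S (maxg GM)).
  assert (HN : forall x, occurs_goal x GM -> x < N).
  { intros x Hx. apply occurs_goal_le in Hx. unfold N. lia. }
  set (r := fun x => x + N).
  assert (Hr : injective r). { intros x y E. unfold r in E. lia. }
  destruct HR as [HS | (A0 & v & GM' & GP' & -> & -> & HuA & HS' & Hv1 & Hv2)].
  - destruct HS as [|L GM'' GP'' HL HS''].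
    + destruct HV as [_ [et ->]]. constructor. intros G' (A & rest & _ & _ & _ & _ & E & _).
      discriminate.
    + assert (HGM : forall x, occurs_goal x GM'' -> x < N).
      { intros x Hx. apply HN. apply occ_cons_r. auto. }
      destruct L as [| b [| b' L'']].
      *
        apply (IH GM'') with (GP0 := GP''); auto; [|left; auto].
        exists (solve true_t), GM'', (solve true_t), [], r, Var.
        split; [reflexivity|]. split; [apply in_or_app; left; simpl; auto|].
        split; [auto|]. split; [apply fresh_shift; unfold N; lia|].
        split; [|simpl; rewrite map_apply_var; auto].
        split; [reflexivity|]. intros t _. exists t. intros; reflexivity.
      *
        inversion HL as [|? ? Hb _]; subst.
        set (s0 := fun x => if Nat.eq_dec x (r 0) then b else Var x).
        assert (Hbr : forall x, occurs x b -> x < N).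
        { intros x Hx. apply HN. apply occ_cons_l. apply occ_sub1. exact Hx. }
        assert (Hs0 : forall u, (forall x, occurs x u -> x < N) -> apply s0 u = u).
        { intros u Hu. rewrite <- (apply_var u) at 2. apply apply_ext. intros x Hx.
          unfold s0. destruct (Nat.eq_dec x (r 0)) as [E|E]; auto. specialize (Hu x Hx). unfold r in E. lia. }
        apply (IH (clause_at b (Var (r 1)) :: solve (Var (r 1)) :: GM'')) with (GP0 := b :: GP''); auto.
        -- exists (solve b), GM'', (solve (Var 0)), [clause_at (Var 0) (Var 1); solve (Var 1)], r, s0.
           split; [reflexivity|]. split; [apply in_or_app; left; simpl; auto|].
           split; [auto|]. split; [apply fresh_shift; unfold N; lia|]. split.
           ++ split.
              ** unfold unifier. change (solve (apply s0 b) = solve (s0 (r 0))).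
                 rewrite Hs0 by auto. unfold s0. destruct (Nat.eq_dec (r 0) (r 0)); [auto|congruence].
              ** intros t Ht. unfold unifier in Ht. simpl in Ht. injection Ht as Ht.
                 exists t. intros x. unfold s0. destruct (Nat.eq_dec x (r 0)); subst; auto.
           ++ simpl. rewrite (map_apply_ext s0 Var), map_apply_var.
              2:{ intros x Hx. unfold s0. destruct (Nat.eq_dec x (r 0)) as [E|E]; auto.
                  specialize (HGM x Hx). unfold r in E. lia. }
              unfold s0. destruct (Nat.eq_dec (r 0) (r 0)); [|congruence].
              destruct (Nat.eq_dec (r 1) (r 0)) as [EE|?]; [unfold r in EE; lia|]. reflexivity.
        -- right. exists b, (r 1), GM'', GP''. repeat split; auto.
           ++ intros Hx. apply Hbr in Hx. unfold r in Hx. lia.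
           ++ intros Hx. apply HGM in Hx. unfold r in Hx. lia.
      *
        inversion HL as [|? ? Hb HL']; subst.
        set (e := enc_body (b' :: L'')).
        set (s0 := fun x => if Nat.eq_dec x (r 0) then b else
                            if Nat.eq_dec x (r 1) then e else Var x).
        assert (Hs0 : forall u, (forall x, occurs x u -> x < N) -> apply s0 u = u).
        { intros u Hu. rewrite <- (apply_var u) at 2. apply apply_ext. intros x Hx.
          specialize (Hu x Hx). unfold s0.
          destruct (Nat.eq_dec x (r 0)) as [EE|?]; [unfold r in EE; lia|].
          destruct (Nat.eq_dec x (r 1)) as [EE|?]; [unfold r in EE; lia|]. auto. }
        assert (Hbr : forall x, occurs x (comma b e) -> x < N).
        { intros x Hx. apply HN. apply occ_cons_l. apply occ_sub1. exact Hx. }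
        apply (IH (solve b :: solve e :: GM'')) with (GP0 := (b :: b' :: L'') ++ GP''); auto.
        -- exists (solve (comma b e)), GM'', (solve (comma (Var 0) (Var 1))),
                  [solve (Var 0); solve (Var 1)], r, s0.
           split; [reflexivity|]. split; [apply in_or_app; left; simpl; auto|].
           split; [auto|]. split; [apply fresh_shift; unfold N; lia|]. split.
           ++ split.
              ** unfold unifier. change (solve (apply s0 (comma b e)) =
                                         solve (comma (s0 (r 0)) (s0 (r 1)))).
                 rewrite Hs0 by auto. unfold s0.
                 destruct (Nat.eq_dec (r 0) (r 0)); [|congruence].
                 destruct (Nat.eq_dec (r 1) (r 0)) as [EE|?]; [unfold r in EE; lia|].
                 destruct (Nat.eq_dec (r 1) (r 1)); [|congruence]. reflexivity.
              ** intros t Ht. unfold unifier in Ht. simpl in Ht. injection Ht as Ht1 Ht2.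
                 exists t. intros x. unfold s0.
                 destruct (Nat.eq_dec x (r 0)); [subst; auto|].
                 destruct (Nat.eq_dec x (r 1)); [subst; auto|]. reflexivity.
           ++ simpl. rewrite (map_apply_ext s0 Var), map_apply_var.
              2:{ intros x Hx. specialize (HGM x Hx). unfold s0.
                  destruct (Nat.eq_dec x (r 0)) as [EE|?]; [unfold r in EE; lia|].
                  destruct (Nat.eq_dec x (r 1)) as [EE|?]; [unfold r in EE; lia|]. auto. }
              unfold s0. destruct (Nat.eq_dec (r 0) (r 0)); [|congruence].
              destruct (Nat.eq_dec (r 1) (r 0)) as [EE|?]; [unfold r in EE; lia|].
              destruct (Nat.eq_dec (r 1) (r 1)); [|congruence]. reflexivity.
        -- left. change (SR (solve (enc_body [b]) :: solve (enc_body (b' :: L'')) :: GM'')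
                          ([b] ++ (b' :: L'') ++ GP'')).
           constructor; [constructor; auto|]. constructor; auto.
  -
    constructor. intros GP1 (A & rest & H & B & r1 & s & HG & Hin & Hinj & Hfr & Hm & ->).
    subst GP.
    assert (HGP' : forall x, occurs_goal x (A0 :: GP') -> x < N).
    { intros x Hx. apply HN. apply occurs_goal_cons in Hx. destruct Hx as [Hx|Hx].
      apply occ_cons_l. apply occ_sub1. auto. apply occ_cons_r, occ_cons_r. eapply S_vars; eauto. }
    destruct (bisim A rest A0 GP' H B r1 s r) as [s2 [[Hu2 Hg2] HV2]]; auto.
    { apply var_eq_sym. auto. }
    { apply fresh_shift2. auto. }
    assert (HvN : v < N). { apply HN. apply occ_cons_l. apply occ_sub2. simpl. auto. }
    assert (Hrv : forall t, occurs v (rename r t) -> False).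
    { intros t Ht. apply occurs_rename in Ht. destruct Ht as [y [_ Hy]]. unfold r in Hy. lia. }
    set (rB := map (rename r) B).
    set (sM := fun x => if Nat.eq_dec x v then apply s2 (enc_body rB) else s2 x).
    assert (HsM : forall u, ~ occurs v u -> apply sM u = apply s2 u).
    { intros u Hu. apply apply_ext. intros x Hx. unfold sM.
      destruct (Nat.eq_dec x v); [subst; contradiction|auto]. }
    assert (HvB : ~ occurs v (enc_body rB)).
    { unfold rB. rewrite <- rename_enc. intro HH; eapply Hrv; exact HH. }
    apply (IH (solve (enc_body (map (apply s2) rB)) :: map (apply s2) GM'))
      with (GP0 := map (apply s2) rB ++ map (apply s2) GP').
    + exists (clause_at A0 (Var v)), (solve (Var v) :: GM'), (clause_at H (enc_body B)), [], r, sM.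
      split; [reflexivity|]. split.
      { apply in_or_app; right. apply in_map_iff. exists (H, B). auto. }
      split; [auto|]. split; [apply fresh_shift2; auto|]. split.
      * rewrite rename_clause_at. fold rB. split.
        -- unfold unifier. simpl. rewrite !HsM; auto.
           2:{ intro HH; eapply Hrv; exact HH. }
           rewrite Hu2. f_equal. f_equal. f_equal. unfold sM.
           destruct (Nat.eq_dec v v); [|congruence]. auto.
        -- intros t Ht. unfold unifier in Ht. simpl in Ht. injection Ht as Ht1 Ht2.
           destruct (Hg2 t Ht1) as [d Hd]. exists d. intros x. unfold sM.
           destruct (Nat.eq_dec x v); auto. subst x. rewrite Ht2.
           rewrite apply_comp. apply apply_ext. auto.
      * simpl. f_equal.
        -- unfold sM. destruct (Nat.eq_dec v v); [|congruence]. rewrite apply_enc. auto.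
        -- apply map_apply_ext. intros x Hx. unfold sM.
           destruct (Nat.eq_dec x v); [subst; contradiction|auto].
    + left. constructor.
      * unfold rB. rewrite map_map. apply Forall_forall. intros u Hu.
        apply in_map_iff in Hu. destruct Hu as [b [<- Hb]].
        apply uh_apply. apply uh_apply. destruct (HP _ Hin) as [_ HB].
        destruct (HB b Hb) as (p & args & E & _). exists p, args; auto.
      * apply S_subst. auto.
    + rewrite <- map_app. apply var_eq_sym. auto.
Qed.

Lemma dirA P : user_program P -> forall GP, ld_finite P GP ->
  forall n GM GP0, msr GM < n -> Rel GM GP0 -> var_eq GP0 GP -> ld_finite (M0 ++ ce P) GM.
Proof.
  intros HP GP HA. induction HA as [GP _ IHo]. intro n.
  induction n as [|n IHn]; intros GM GP0 Hn HR HV; [lia|].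
  destruct HR as [HS | (A0 & v & GM' & GP' & -> & -> & HuA & HS' & Hv1 & Hv2)].
  - destruct HS as [|L GM'' GP'' HL HS''].
    { constructor. intros G' (A & rest & _ & _ & _ & _ & E & _). discriminate. }
    constructor. intros GM1 (A & rest & Hc & Bc & r & s & HG & Hin & Hinj & Hfr & [Hu Hg] & ->).
    injection HG as <- <-.
    apply M_clause in Hin.
    destruct Hin as [[-> ->]|[[-> ->]|[[-> ->]|(H & B & HinP & -> & ->)]]].
    +
      destruct L as [| b [| b' L'']].
      * destruct (Hg Var) as [d Hd]. { unfold unifier. reflexivity. }
        apply (acc_var _ GM'').
        { apply (IHn GM'' GP''); [simpl in Hn; lia | left; auto | exact HV]. }
        simpl. apply (var_eq_subst s d). intros x _. rewrite <- Hd. reflexivity.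
      * inversion HL as [|? ? [p [args Hb]] _]; subst. simpl in Hu. discriminate.
      * simpl in Hu. discriminate.
    +
      destruct L as [| b [| b' L'']].
      * simpl in Hu. discriminate.
      * inversion HL as [|? ? [p [args Hb]] _]; subst. simpl in Hu. discriminate.
      * inversion HL as [|? ? Hb HL']; subst.
        set (e := enc_body (b' :: L'')) in *.
        assert (Hu' : solve (comma (apply s b) (apply s e)) = solve (comma (s (r 0)) (s (r 1))))
          by exact Hu.
        injection Hu' as H0 H1.
        assert (F : forall x, occurs_goal x (solve (comma b e) :: GM'') -> x <> r 0 /\ x <> r 1).
        { intros x Hx. split; intros ->; revert Hx; apply Hfr; apply occ_cons_l; simpl; auto. }
        set (ideal := solve b :: solve e :: GM'').
        assert (Fi : forall x, occurs_goal x ideal -> occurs_goal x (solve (comma b e) :: GM'')).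
        { intros x Hx. unfold ideal in Hx. apply occurs_goal_cons in Hx. destruct Hx as [Hx|Hx].
          apply occ_cons_l. apply occ_sub1. apply occurs_Fun in Hx.
          destruct Hx as [u [[<-|[]] Hx]]. apply occ_sub1. auto.
          apply occurs_goal_cons in Hx. destruct Hx as [Hx|Hx].
          apply occ_cons_l. apply occ_sub1. apply occurs_Fun in Hx.
          destruct Hx as [u [[<-|[]] Hx]]. apply occ_sub2. auto.
          apply occ_cons_r. auto. }
        set (s0 := fun x => if Nat.eq_dec x (r 0) then b else
                            if Nat.eq_dec x (r 1) then e else Var x).
        assert (Hr10 : r 1 <> r 0). { intros E. apply Hinj in E. discriminate. }
        destruct (Hg s0) as [d Hd].
        { unfold unifier. transitivity (solve (comma b e)).
          - change (apply s0 (solve (comma b e)) = solve (comma b e)).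
            rewrite <- (apply_var (solve (comma b e))) at 2. apply apply_ext.
            intros x Hx. destruct (F x) as [F0 F1]. apply occ_cons_l; auto.
            unfold s0. destruct (Nat.eq_dec x (r 0)); [contradiction|].
            destruct (Nat.eq_dec x (r 1)); [contradiction|]. auto.
          - change (solve (comma b e) = solve (comma (s0 (r 0)) (s0 (r 1)))).
            unfold s0. destruct (Nat.eq_dec (r 0) (r 0)); [|congruence].
            destruct (Nat.eq_dec (r 1) (r 0)); [congruence|].
            destruct (Nat.eq_dec (r 1) (r 1)); [|congruence]. auto. }
        assert (E : map (apply s) (map (rename r) [solve (Var 0); solve (Var 1)] ++ GM'') =
                    map (apply s) ideal).
        { change (solve (s (r 0)) :: solve (s (r 1)) :: map (apply s) GM'' =
                  solve (apply s b) :: solve (apply s e) :: map (apply s) GM'').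
          rewrite H0, H1. reflexivity. }
        rewrite E. apply (acc_var _ ideal).
        { apply (IHn ideal ((b :: b' :: L'') ++ GP'')); auto.
          - destruct Hb as [p [args ->]].
            assert (Hm : msr (solve (comma (Fun (Usr p) args) e) :: GM'') = S (S (S (w e + msr GM''))))
              by reflexivity.
            assert (Hm2 : msr ideal = S (S (w e + msr GM''))) by reflexivity.
            change (msr (solve (comma (Fun (Usr p) args) e) :: GM'') < S n) in Hn.
            rewrite Hm2. rewrite Hm in Hn. lia.
          - left. change (SR (solve (enc_body [b]) :: solve (enc_body (b' :: L'')) :: GM'')
                          ([b] ++ (b' :: L'') ++ GP'')).
            constructor; [constructor; auto|]. constructor; auto. }
        apply (var_eq_subst s d). intros x Hx. rewrite <- Hd.
        destruct (F x (Fi x Hx)) as [F0 F1]. unfold s0.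
        destruct (Nat.eq_dec x (r 0)); [contradiction|].
        destruct (Nat.eq_dec x (r 1)); [contradiction|]. auto.
    +
      assert (Hu' : solve (apply s (enc_body L)) = solve (s (r 0))) by exact Hu.
      injection Hu' as H0.
      assert (E : map (apply s) (map (rename r) [clause_at (Var 0) (Var 1); solve (Var 1)] ++ GM'') =
                  clause_at (s (r 0)) (s (r 1)) :: solve (s (r 1)) :: map (apply s) GM'')
        by reflexivity.
      rewrite E. clear E.
      destruct L as [| b [| b' L'']].
      * rewrite <- H0. apply (dead P _ _ _ TrueS []); auto. intros p E; discriminate.
      * inversion HL as [|? ? Hb _]; subst.
        assert (F : forall x, occurs_goal x (solve b :: GM'') -> x <> r 0).
        { intros x Hx ->; revert Hx; apply Hfr; apply occ_cons_l; simpl; auto. }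
        assert (F1 : ~ occurs_goal (r 1) (solve b :: GM'')).
        { apply Hfr. simpl. apply occ_cons_r, occ_cons_l. simpl. auto. }
        assert (Hr10 : r 1 <> r 0). { intros E. apply Hinj in E. discriminate. }
        set (ideal := clause_at b (Var (r 1)) :: solve (Var (r 1)) :: GM'').
        set (s0 := fun x => if Nat.eq_dec x (r 0) then b else Var x).
        destruct (Hg s0) as [d Hd].
        { unfold unifier. transitivity (solve b).
          - change (apply s0 (solve b) = solve b).
            rewrite <- (apply_var (solve b)) at 2. apply apply_ext.
            intros x Hx. unfold s0. destruct (Nat.eq_dec x (r 0)); auto.
            exfalso. apply (F x); auto. apply occ_cons_l; auto.
          - change (solve b = solve (s0 (r 0))).
            unfold s0. destruct (Nat.eq_dec (r 0) (r 0)); [auto|congruence]. }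
        assert (E : clause_at (s (r 0)) (s (r 1)) :: solve (s (r 1)) :: map (apply s) GM'' =
                    map (apply s) ideal).
        { rewrite <- H0. reflexivity. }
        rewrite E. apply (acc_var _ ideal).
        { apply (IHn ideal (b :: GP'')); auto.
          - destruct Hb as [p [args ->]]. unfold ideal. simpl in Hn |- *. lia.
          - right. exists b, (r 1), GM'', GP''. repeat split; auto.
            + intros Hx. apply F1. apply occ_cons_l. apply occ_sub1. auto.
            + intros Hx. apply F1. apply occ_cons_r. auto. }
        apply (var_eq_subst s d). intros x Hx. rewrite <- Hd. unfold s0.
        destruct (Nat.eq_dec x (r 0)) as [Ex|]; auto. exfalso. subst x.
        unfold ideal in Hx. apply occurs_goal_cons in Hx. destruct Hx as [Hx|Hx].
        { apply occurs_Fun in Hx. destruct Hx as [u [[<-|[<-|[]]] Hx]].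
          - apply (F (r 0)); auto. apply occ_cons_l. apply occ_sub1. auto.
          - simpl in Hx. congruence. }
        apply occurs_goal_cons in Hx. destruct Hx as [Hx|Hx].
        { simpl in Hx. destruct Hx as [Hx|[]]. congruence. }
        apply (F (r 0)); auto. apply occ_cons_r. auto.
      * rewrite <- H0. apply (dead P _ _ _ Comma (map (apply s) [b; enc_body (b' :: L'')])); auto.
        intros p E; discriminate.
    +
      rewrite rename_clause_at in Hu. simpl in Hu. discriminate.
  -
    constructor. intros GM1 (A & rest & Hc & Bc & r & s & HG & Hin & Hinj & Hfr & [Hu Hg] & ->).
    injection HG as <- <-.
    apply M_clause in Hin.
    destruct Hin as [[-> ->]|[[-> ->]|[[-> ->]|(H & B & HinP & -> & ->)]]];
      try (simpl in Hu; discriminate).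
    rewrite rename_clause_at in Hu, Hg, Hfr.
    set (rB := map (rename r) B) in *.
    assert (Hu' : clause_at (apply s A0) (s v) = clause_at (apply s (rename r H)) (apply s (enc_body rB)))
      by exact Hu.
    injection Hu' as HA Hvv.
    set (GM := clause_at A0 (Var v) :: solve (Var v) :: GM').
    assert (FH : forall x, occurs x (rename r H) -> ~ occurs_goal x GM).
    { intros x Hx. apply Hfr. apply occ_cons_l. apply occ_sub1. auto. }
    assert (FB : forall x, occurs x (enc_body rB) -> ~ occurs_goal x GM).
    { intros x Hx. apply Hfr. apply occ_cons_l. apply occ_sub2. auto. }
    assert (HvG : occurs_goal v GM). { apply occ_cons_l. apply occ_sub2. simpl. auto. }
    assert (E : map (apply s) (map (rename r) [] ++ solve (Var v) :: GM') =
                solve (enc_body (map (apply s) rB)) :: map (apply s) GM').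
    { simpl. rewrite Hvv, apply_enc. reflexivity. }
    rewrite E. clear E.
    set (X := map (apply s) rB ++ map (apply s) GP').
    set (sP := ext (fun x => x <> v) s).
    assert (Hstep : ld_step P (A0 :: GP') (map (rename dbl) X)).
    { exists A0, GP', H, B, r, sP.
      split; [reflexivity|]. split; [auto|]. split; [auto|]. split; [|split].
      - intros x Hx Hx2. apply occurs_goal_cons in Hx.
        assert (Hx' : occurs x (rename r H) \/ occurs x (enc_body rB)).
        { destruct Hx as [Hx|[b [Hb Hx]]]; [auto|right]. eapply occurs_enc; eauto. }
        assert (Hx2' : occurs_goal x GM).
        { apply occurs_goal_cons in Hx2. destruct Hx2 as [Hx2|Hx2].
          apply occ_cons_l. apply occ_sub1. auto.
          apply occ_cons_r, occ_cons_r. eapply S_vars; eauto. }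
        destruct Hx' as [Hx'|Hx']; [eapply FH|eapply FB]; eauto.
      - apply mgu_of_partial; auto.
        + intros x Hx ->. contradiction.
        + intros x Hx ->. eapply FH; eauto.
        + intros t Ht.
          set (t2 := fun x => if Nat.eq_dec x v then apply t (enc_body rB) else t x).
          assert (Ht2 : forall u, ~ occurs v u -> apply t2 u = apply t u).
          { intros u Hu2. apply apply_ext. intros x Hx. unfold t2.
            destruct (Nat.eq_dec x v); [subst; contradiction|auto]. }
          destruct (Hg t2) as [d Hd].
          { unfold unifier. change (clause_at (apply t2 A0) (t2 v) =
                 clause_at (apply t2 (rename r H)) (apply t2 (enc_body rB))).
            rewrite !Ht2; auto.
            2:{ intros Hx. eapply FB; eauto. }
            2:{ intros Hx. eapply FH; eauto. }
            rewrite Ht. unfold t2. destruct (Nat.eq_dec v v); [auto|congruence]. }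
          exists d. intros x Hx. rewrite <- Hd. unfold t2.
          destruct (Nat.eq_dec x v); [contradiction|auto].
      - unfold X. rewrite !map_app. f_equal.
        + unfold rB. rewrite !map_map. apply map_ext_in. intros b Hb.
          symmetry. unfold sP. rewrite apply_ext_V; auto. intros x Hx ->.
          apply (FB v); auto. eapply occurs_enc; eauto. unfold rB. apply in_map. auto.
        + rewrite map_map. apply map_ext_in. intros u Hu2.
          symmetry. unfold sP. rewrite apply_ext_V; auto. intros x Hx ->. apply Hv2.
          eapply S_vars; eauto. exists u. auto. }
    destruct (step_var P (A0 :: GP') GP _ HV Hstep) as [GP2 [Hs2 HV2]].
    apply (IHo GP2 Hs2 (Datatypes.S (msr (solve (enc_body (map (apply s) rB)) :: map (apply s) GM'))) _ X).
    + lia.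
    + left. constructor.
      * unfold rB. rewrite map_map. apply Forall_forall. intros u Hu2.
        apply in_map_iff in Hu2. destruct Hu2 as [b [<- Hb]].
        apply uh_apply. apply uh_apply. destruct (HP _ HinP) as [_ HB].
        destruct (HB b Hb) as (p & args & E & _). exists p, args; auto.
      * apply S_subst. auto.
    + eapply var_eq_trans; [apply var_eq_dbl|exact HV2].
Qed.

Theorem mainTheorem3 (P : program) (Q0 : term) :
  user_program P -> user_atom Q0 ->
  (ld_finite P [Q0] <-> ld_finite (M0 ++ ce P) [solve Q0]).
Proof.
  intros HP HQ.
  assert (HR : Rel [solve Q0] [Q0]).
  { left. change (SR (solve (enc_body [Q0]) :: []) ([Q0] ++ [])). constructor; [|constructor].
    constructor; [|constructor]. destruct HQ as (p & args & E & _). exists p, args; auto. }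
  split.
  - intros HA. apply (dirA P HP [Q0] HA (Datatypes.S (msr [solve Q0])) _ [Q0]); auto.
    apply var_eq_refl.
  - intros HA. apply (dirB P HP _ HA [Q0] [Q0]); auto. apply var_eq_refl.
Qed.
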